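(* Let $P$ be a domain and $D\ge 2$ an integer. Let $q_1,\dots,q_\ell$ ($\ell\ge1$) be distinct pixels of $P$ forming a path $q_1q_2\cdots q_\ell$ in $G_P$ whose pixel centers lie either on one straight segment or on two perpendicular segments meeting at one bend, such that $q_1$ is a boundary pixel and $\mathrm{vdist}(q_i)=i$ for $i=1,\dots,\ell$. Let $1\le J\le \ell$, and suppose $q_1,\dots,q_J$ carry no snow, each of $q_{J+1},\dots,q_\ell$ carries exactly one unit of snow, and the snowblower stands on $q_1$. Write $\ell-J=kD+r$ with integers $k\ge0$, $0\le r<D$, and let $\Delta=\frac1D\sum_{i=J+1}^{\ell} i$. Then in the default model there is a sequence of moves obeying the capacity constraint, in which the snowblower only visits pixels among $q_1,\dots,q_\ell$ and snow is only thrown onto pixels among $q_1,\dots,q_\ell$ or out of $P$, which ends with the snowblower on $q_1$ and none of $q_1,\dots,q_\ell$ carrying snow, and whose number of moves is at most $2(\ell-1)+4\Delta$ if $D\ge4$ and at most $2(\ell-1)+2\Delta$ if $D\in\{2,3\}$. Moreover, if $r=0$, the number of moves is at most $4\Delta$ if $D\ge 4$ and at most $2\Delta$ if $D\in\{2,3\}$.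
   Context: A pixel is a closed unit square $[i,i+1]\times[j,j+1]$, $i,j\in\mathbb{Z}$; two pixels are adjacent if they share a side. The domain $P$ is a finite set of pixels whose dual graph $G_P$ (vertex per pixel, edges between adjacent pixels) is connected. A boundary side is a side of a pixel of $P$ not shared with another pixel of $P$; a boundary pixel is a pixel of $P$ with a boundary side. For $q\in P$, $\mathrm{vdist}(q)=1+\min_{b}\mathrm{dist}_{G_P}(q,b)$, the minimum over boundary pixels $b$ of $P$. A move (default model): the snowblower goes from its pixel $v$ to an adjacent pixel $u\in P$, and upon entering $u$ all snow on $u$ is thrown onto any chosen one of the four pixels adjacent to $u$ (including $v$); if that pixel is not in $P$ the snow disappears, otherwise it is added to the snow there. Capacity constraint: at all times every pixel of $P$ carries at most $D$ units of snow. *)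

(* Defs.v *)
From mathcomp Require Import all_boot all_order all_algebra.
Set Implicit Arguments. Unset Strict Implicit. Unset Printing Implicit Defensive.
Import Order.TTheory GRing.Theory Num.Theory.

(* A pixel [i,i+1]x[j,j+1] is represented by its lower-left corner (i,j). *)
Definition pixel := (int * int)%type.

Definition adj (p q : pixel) : bool :=
  ((p.1 == q.1) && ((p.2 == q.2 + 1)%R || (q.2 == p.2 + 1)%R)) ||
  ((p.2 == q.2) && ((p.1 == q.1 + 1)%R || (q.1 == p.1 + 1)%R)).

Definition walk (P : seq pixel) (a b : pixel) (n : nat) : Prop :=
  exists s : seq pixel,
    [/\ a \in P, path adj a s, all (mem P) s, last a s = b & size s = n].

Definition domain (P : seq pixel) : Prop :=
  forall a b, a \in P -> b \in P -> exists n, walk P a b n.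

Definition boundary (P : seq pixel) (b : pixel) : Prop :=
  b \in P /\ exists c, adj b c /\ c \notin P.

Definition vdist_is (P : seq pixel) (q : pixel) (v : nat) : Prop :=
  (exists b n, [/\ boundary P b, walk P q b n & v = n.+1]) /\
  (forall b n, boundary P b -> walk P q b n -> v <= n.+1).

Definition state := (pixel * (pixel -> nat))%type.

Definition capacity (P : seq pixel) (D : nat) (s : pixel -> nat) : Prop :=
  forall p, p \in P -> s p <= D.

(* A move in the default model: the snowblower goes from v to an adjacent
   pixel u of P, and all snow on u is thrown onto the adjacent pixel w
   (disappearing if w is not in P). *)
Definition legal_move (P : seq pixel) (v u w : pixel) : bool :=
  [&& adj v u, u \in P & adj u w].

Definition throw_snow (P : seq pixel) (s : pixel -> nat) (u w : pixel) :
  pixel -> nat :=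
  fun p => if p == u then 0
           else if (p == w) && (w \in P) then s p + s u else s p.

Definition step (P : seq pixel) (st : state) (m : pixel * pixel) : state :=
  (m.1, throw_snow P st.2 m.1 m.2).

Definition final_state (P : seq pixel) (st : state) (ms : seq (pixel * pixel)) :
  state := foldl (step P) st ms.

(* [valid_run P D ok st ms]: the sequence of moves ms (target pixel, throw
   pixel) from st consists of legal moves, each allowed by [ok], and the
   capacity constraint holds after every move. *)
Fixpoint valid_run (P : seq pixel) (D : nat) (ok : pixel -> pixel -> bool)
  (st : state) (ms : seq (pixel * pixel)) : Prop :=
  match ms with
  | [::] => True
  | m :: ms' =>
      [/\ legal_move P st.1 m.1 m.2, ok m.1 m.2,
          capacity P D (step P st m).2 & valid_run P D ok (step P st m) ms']
  end.

Definition aligned (q : nat -> pixel) (a b : nat) : Prop :=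
  (forall i, a <= i <= b -> (q i).1 = (q a).1) \/
  (forall i, a <= i <= b -> (q i).2 = (q a).2).

Definition straight_or_one_bend (q : nat -> pixel) (l : nat) : Prop :=
  exists m, [/\ 1 <= m <= l, aligned q 1 m & aligned q m l].

Definition on_path (q : nat -> pixel) (l : nat) : seq pixel :=
  [seq q i | i <- iota 1 l].

(* Main.v *)
Require Import Defs.
From mathcomp Require Import all_boot all_order all_algebra.
From mathcomp Require Import zify.
Import Order.TTheory GRing.Theory Num.Theory.
Set Implicit Arguments. Unset Strict Implicit.

Lemma adjC p r : adj p r = adj r p.
Proof.
rewrite /adj [r.1 == p.1]eq_sym [r.2 == p.2]eq_sym.
by rewrite [(r.2 == (p.2 + 1)%R) || _]orbC [(r.1 == (p.1 + 1)%R) || _]orbC.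
Qed.

Lemma valid_run_cat P D ok st ms1 ms2 :
  valid_run P D ok st ms1 -> valid_run P D ok (final_state P st ms1) ms2 ->
  valid_run P D ok st (ms1 ++ ms2).
Proof.
elim: ms1 st => [|m ms IH] st //= [H1 H2 H3 H4] H5; split => //.
exact: IH.
Qed.

Lemma final_cat P st ms1 ms2 :
  final_state P st (ms1 ++ ms2) = final_state P (final_state P st ms1) ms2.
Proof. by rewrite /final_state foldl_cat. Qed.

Section Algo.
Variables (P : seq pixel) (D l : nat) (q : nat -> pixel) (s0 : pixel -> nat) (c : pixel).
Hypothesis HD : 1 <= D.
Hypothesis HqP : forall i, 1 <= i <= l -> q i \in P.
Hypothesis Hinj : forall i j, 1 <= i <= l -> 1 <= j <= l -> q i = q j -> i = j.
Hypothesis Hadj : forall i, 1 <= i < l -> adj (q i) (q i.+1).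
Hypothesis Hc : adj (q 1) c.
Hypothesis HcP : c \notin P.
Hypothesis Hcap0 : capacity P D s0.

Definition okf := fun u w => (u \in on_path q l) && ((w \in on_path q l) || (w \notin P)).

Definition Reach (st : state) (Q : state -> Prop) (n : nat) :=
  exists ms, [/\ size ms = n, valid_run P D okf st ms & Q (final_state P st ms)].

Lemma Reach0 st (Q : state -> Prop) : Q st -> Reach st Q 0.
Proof. by move=> H; exists [::]. Qed.

Lemma Reach_trans st Q R n n' : Reach st Q n ->
  (forall st', Q st' -> Reach st' R n') -> Reach st R (n + n').
Proof.
move=> [ms [H1 H2 H3]] H; have [ms' [H1' H2' H3']] := H _ H3.
exists (ms ++ ms'); split; first by rewrite size_cat H1 H1'.
  exact: valid_run_cat.
by rewrite final_cat.
Qed.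

Lemma Reach_trans2 st Q R n n' N : N = n + n' -> Reach st Q n ->
  (forall st', Q st' -> Reach st' R n') -> Reach st R N.
Proof. move=> ->; exact: Reach_trans. Qed.

Lemma Reach_mono st (Q R : state -> Prop) n : (forall st, Q st -> R st) ->
  Reach st Q n -> Reach st R n.
Proof. by move=> H [ms [H1 H2 H3]]; exists ms; split => //; apply: H. Qed.

Lemma mem_path i : 1 <= i <= l -> q i \in on_path q l.
Proof. move=> Hi; apply: map_f; rewrite mem_iota; lia. Qed.

Lemma path_inv p : p \in on_path q l -> exists2 i, 1 <= i <= l & p = q i.
Proof. by case/mapP => i; rewrite mem_iota => Hi ->; exists i => //; lia. Qed.

Definition Rel (g : nat -> nat) (s : pixel -> nat) :=
  (forall j, 0 < j <= l -> s (q j) = g j) /\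
  (forall p, p \notin on_path q l -> s p = s0 p).

Definition St i g (st : state) := st.1 = q i /\ Rel g st.2.

Definition astep (g : nat -> nat) k : nat -> nat :=
  fun j => if j == k then 0 else if j == k.-1 then g j + g k else g j.

Definition thr k := if k == 1 then c else q k.-1.

Lemma Rel_step g s k : 1 <= k <= l -> Rel g s ->
  Rel (astep g k) (throw_snow P s (q k) (thr k)).
Proof.
move=> Hk [H1 H2]; split.
  move=> j Hj; rewrite /throw_snow /astep /thr.
  have Hjk : (q j == q k) = (j == k).
    apply/eqP/eqP => [|->] //; apply: Hinj; lia.
  rewrite Hjk; case: (eqVneq j k) => // Hjk'.
  case: (eqVneq k 1) => [Ek1|Ek1].
    rewrite (negbTE HcP) andbF.
    have -> : (j == k.-1) = false by apply/eqP; lia.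
    exact: H1.
  rewrite HqP; last lia.
  have -> : (q j == q k.-1) = (j == k.-1).
    apply/eqP/eqP => [|->] //; apply: Hinj; lia.
  rewrite andbT; case: eqP => _; rewrite !H1 //; lia.
move=> p Hp; rewrite /throw_snow /thr.
have -> : (p == q k) = false.
  by apply/eqP => E; move: Hp; rewrite E mem_path.
case: (eqVneq k 1) => Hk1.
  by rewrite (negbTE HcP) andbF; apply: H2.
case: eqP => [E|]; last by move=> _; apply: H2.
move: Hp; rewrite E mem_path //; lia.
Qed.

Lemma Rel_cap g s : Rel g s -> (forall j, 0 < j <= l -> g j <= D) ->
  capacity P D s.
Proof.
move=> [H1 H2] Hg p Hp.
case: (boolP (p \in on_path q l)) => Hpp.
  have [i Hi ->] := path_inv Hpp; rewrite H1 //; exact: Hg.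
by rewrite H2 //; apply: Hcap0.
Qed.

Lemma St_ext i g g' st : St i g st -> (forall j, 0 < j <= l -> g j = g' j) ->
  St i g' st.
Proof.
move=> [H0 [H1 H2]] H; split => //; split => // j Hj; rewrite H1 //; exact: H.
Qed.

Lemma Reach_step i k g g' st : St i g st -> 1 <= i <= l -> 1 <= k <= l ->
  (k == i.+1) || (i == k.+1) ->
  (forall j, 0 < j <= l -> astep g k j = g' j) ->
  (forall j, 0 < j <= l -> g' j <= D) ->
  Reach st (St k g') 1.
Proof.
move=> [Hpos HR] Hi Hk Hki Hg Hcap.
exists [:: (q k, thr k)]; split => //=.
  have HR' := Rel_step Hk HR.
  split => //.
  - rewrite /legal_move Hpos HqP //=; apply/andP; split.
      case/orP: Hki => /eqP E.
        rewrite E; apply: Hadj; lia.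
      rewrite E adjC; apply: Hadj; lia.
    rewrite /thr; case: (eqVneq k 1) => [->//|Ek].
    rewrite adjC; have -> : q k = q (k.-1).+1 by congr q; lia.
    apply: Hadj; lia.
  - rewrite /okf mem_path //= /thr; case: (eqVneq k 1) => Ek; first by rewrite HcP orbT.
    by rewrite mem_path //; lia.
  - apply: Rel_cap HR' _ => j Hj; rewrite Hg //; exact: Hcap.
split => //=.
have [H1 H2] := Rel_step Hk HR; split => // j Hj; rewrite H1 //; exact: Hg.
Qed.

Definition G a j := if a < j <= l then 1 else 0.
Definition O a i j := if j < i then (if a <= j then 1 else 0)
                      else if j == i then 0 else G a j.
Definition B a m i j := if j < i.-1 then (if a <= j then 1 else 0)
   else if j == i.-1 then m - maxn a i.-1 else if j <= m then 0 else G a j.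

Ltac crunch := rewrite /astep /O /B /G; repeat case: ifPn; lia.

Lemma out_phase a m st : 1 <= a < m -> m <= l -> St 1 (G a) st ->
  forall n, n < m -> Reach st (St n.+1 (O a n.+1)) n.
Proof.
move=> Ham Hml Hst; elim => [|n IH] Hn.
  apply: Reach0; apply: (St_ext Hst) => j Hj; crunch.
apply: (Reach_trans2 (esym (addn1 n))) (IH (ltnW Hn)) _ => st' Hst'.
apply: (Reach_step Hst'); try lia.
all: move=> j Hj; crunch.
Qed.

Lemma back_phase a m st : 1 <= a < m -> m <= l -> m - a <= D ->
  St m (B a m m) st ->
  forall n, n < m -> Reach st (St (m - n) (B a m (m - n))) n.
Proof.
move=> Ham Hml HmD Hst; elim => [|n IH] Hn.
  by apply: Reach0; rewrite subn0.
apply: (Reach_trans2 (esym (addn1 n))) (IH (ltnW Hn)) _ => st' Hst'.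
apply: (Reach_step Hst'); try lia.
all: move=> j Hj; try have -> : m - n.+1 = (m - n).-1 by lia.
all: crunch.
Qed.

Lemma trip a m st : 1 <= a < m -> m <= l -> m - a <= D -> St 1 (G a) st ->
  Reach st (St 1 (G m)) ((m - 1) + (m - 1)).
Proof.
move=> Ham Hml HmD Hst.
have E : (m - 1).+1 = m by lia.
have := out_phase Ham Hml Hst (n := m - 1); rewrite E => Ho.
apply: Reach_trans (Ho _) _; first lia.
move=> st' Hst'.
have Hst'' : St m (B a m m) st' by apply: (St_ext Hst') => j Hj; crunch.
have E2 : m - (m - 1) = 1 by lia.
have := back_phase Ham Hml HmD Hst'' (n := m - 1); rewrite E2 => Hb.
apply: Reach_mono (Hb _); last lia.
move=> st2 H; apply: (St_ext H) => j Hj; crunch.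
Qed.

Definition cD := if D <= 3 then 2 else 4.
Definition S a b := \sum_(a.+1 <= i < b.+1) i.

Lemma sum2 a n : 2 * S a (a + n) = n * (2 * a + n + 1).
Proof.
rewrite /S; elim: n => [|n IH]; first by rewrite addn0 big_geq.
rewrite addnS big_nat_recr /=; last lia.
rewrite mulnDr IH. lia.
Qed.

Lemma S_split a m b : a <= m <= b -> S a b = S a m + S m b.
Proof. move=> H; rewrite /S (@big_cat_nat _ _ _ m.+1) //; lia. Qed.

Lemma batch_bound a : 1 <= a -> D * ((a + D - 1) + (a + D - 1)) <= cD * S a (a + D).
Proof.
move=> Ha; have H := sum2 a D; rewrite /cD; case: ifP => HD3; nia.
Qed.

Lemma iter_trips r : r < D -> forall k a, 1 <= a -> a + k * D + r = l ->
  exists C, (forall st, St 1 (G a) st -> Reach st (St 1 (G l)) C) /\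
    D * C <= cD * S a l + D * (if 0 < r then 2 * (l - 1) else 0).
Proof.
move=> HrD; elim => [|k IH] a Ha Hl.
  case: (posnP r) => Hr.
    exists 0; split; last lia.
    move=> st Hst; apply: Reach0; apply: (St_ext Hst) => j Hj; rewrite /G.
    have -> : a = l by lia. by [].
  exists ((l - 1) + (l - 1)); split.
    move=> st Hst; apply: trip Hst; lia.
  apply: leq_trans (leq_addl _ _); lia.
have [C [HR HC]] := IH (a + D) (ltac:(lia) : 1 <= a + D) (ltac:(lia)).
exists (((a + D) - 1) + ((a + D) - 1) + C); split.
  move=> st Hst; apply: Reach_trans (trip _ _ _ Hst) HR; lia.
rewrite (@S_split a (a + D) l); last lia.
have Hb := batch_bound Ha.
rewrite mulnDr mulnDr; lia.
Qed.

Lemma rat_bound (C S Y e : nat) : 0 < D -> D * C <= e * S + D * Y ->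
  (C%:R <= Y%:R + e%:R * (S%:R / D%:R) :> rat)%R.
Proof.
move=> D0 H.
have D0' : (0 < D%:R :> rat)%R by rewrite ltr0n.
have -> : (Y%:R + e%:R * (S%:R / D%:R) = (D * Y + e * S)%:R / D%:R :> rat)%R.
  rewrite natrD !natrM mulrDl mulrA; congr (_ + _)%R.
  by rewrite mulrAC divff ?mul1r // gt_eqF.
rewrite ler_pdivlMr // -natrM ler_nat. lia.
Qed.

Lemma main_sec J : 1 <= J <= l ->
  (forall i, 1 <= i <= J -> s0 (q i) = 0) ->
  (forall i, J < i <= l -> s0 (q i) = 1) ->
  let Delta : rat := ((\sum_(J.+1 <= i < l.+1) i)%:R / D%:R)%R in
  exists ms : seq (pixel * pixel),
    [/\ valid_run P D
          (fun u w => (u \in on_path q l) &&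
                      ((w \in on_path q l) || (w \notin P)))
          (q 1, s0) ms,
        (final_state P (q 1, s0) ms).1 = q 1,
        (forall i, 1 <= i <= l -> (final_state P (q 1, s0) ms).2 (q i) = 0),
        (4 <= D -> ((size ms)%:R <= (2 * (l - 1))%:R + 4 * Delta)%R) /\
        (D <= 3 -> ((size ms)%:R <= (2 * (l - 1))%:R + 2 * Delta)%R) &
        ((l - J) %% D = 0 ->
          (4 <= D -> ((size ms)%:R <= 4 * Delta)%R) /\
          (D <= 3 -> ((size ms)%:R <= 2 * Delta)%R))].
Proof.
move=> HJ Hz Ho Delta.
have HrD : (l - J) %% D < D by rewrite ltn_pmod.
have Hsum : J + (l - J) %/ D * D + (l - J) %% D = l.
  have := divn_eq (l - J) D; lia.
have [C [HR HC]] := iter_trips HrD (ltac:(lia) : 1 <= J) Hsum.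
have Hst : St 1 (G J) (q 1, s0).
  split => //; split => // j Hj; rewrite /G; case: ifP => H.
    by apply: Ho.
  by apply: Hz; lia.
have [ms [Hsz Hv [Hf1 [Hf2 _]]]] := HR _ Hst.
exists ms; split => //.
- move=> i Hi; rewrite Hf2 ?/G //; case: ifP => //; lia.
- have Hle : (if 0 < (l - J) %% D then 2 * (l - 1) else 0) <= 2 * (l - 1).
    by case: ifP.
  rewrite Hsz; split => HD4.
    have HcD : cD = 4 by rewrite /cD leqNgt HD4.
    apply: (@rat_bound C (S J l) (2 * (l - 1)) 4 HD).
    rewrite HcD in HC; apply: leq_trans HC _; rewrite leq_add2l leq_mul2l Hle orbT //.
  have HcD : cD = 2 by rewrite /cD HD4.
  apply: (@rat_bound C (S J l) (2 * (l - 1)) 2 HD).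
  rewrite HcD in HC; apply: leq_trans HC _; rewrite leq_add2l leq_mul2l Hle orbT //.
- move=> Hr; rewrite Hsz; move: HC; rewrite Hr /= muln0 addn0 => HC; split => HD4.
    have HcD : cD = 4 by rewrite /cD leqNgt HD4.
    have := @rat_bound C (S J l) 0 4 HD; rewrite add0r; apply.
    by rewrite muln0 addn0 -HcD.
  have HcD : cD = 2 by rewrite /cD HD4.
  have := @rat_bound C (S J l) 0 2 HD; rewrite add0r; apply.
  by rewrite muln0 addn0 -HcD.
Qed.

End Algo.

Theorem lemma3 (P : seq pixel) (D l J : nat) (q : nat -> pixel)
    (s0 : pixel -> nat) :
  domain P -> 2 <= D -> 1 <= l ->
  (forall i, 1 <= i <= l -> q i \in P) ->
  (forall i j, 1 <= i <= l -> 1 <= j <= l -> q i = q j -> i = j) ->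
  (forall i, 1 <= i < l -> adj (q i) (q i.+1)) ->
  straight_or_one_bend q l ->
  boundary P (q 1) ->
  (forall i, 1 <= i <= l -> vdist_is P (q i) i) ->
  1 <= J <= l ->
  (forall i, 1 <= i <= J -> s0 (q i) = 0) ->
  (forall i, J < i <= l -> s0 (q i) = 1) ->
  capacity P D s0 ->
  let Delta : rat := ((\sum_(J.+1 <= i < l.+1) i)%:R / D%:R)%R in
  exists ms : seq (pixel * pixel),
    [/\ valid_run P D
          (fun u w => (u \in on_path q l) &&
                      ((w \in on_path q l) || (w \notin P)))
          (q 1, s0) ms,
        (final_state P (q 1, s0) ms).1 = q 1,
        (forall i, 1 <= i <= l -> (final_state P (q 1, s0) ms).2 (q i) = 0),
        (4 <= D -> ((size ms)%:R <= (2 * (l - 1))%:R + 4 * Delta)%R) /\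
        (D <= 3 -> ((size ms)%:R <= (2 * (l - 1))%:R + 2 * Delta)%R) &
        ((l - J) %% D = 0 ->
          (4 <= D -> ((size ms)%:R <= 4 * Delta)%R) /\
          (D <= 3 -> ((size ms)%:R <= 2 * Delta)%R))].
Proof.
move=> _ HD2 _ HqP Hinj Hadj _ [_ [c [Hc HcP]]] _ HJ Hz Ho Hcap.
exact: (@main_sec P D l q s0 c (ltnW HD2) HqP Hinj Hadj Hc HcP Hcap J HJ Hz Ho).
Qed.
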